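(* Let $f:\mathbb{R}^\ell\times\mathbb{R}^m\to\mathbb{R}^\ell$ be $C^1$, let $\Lambda$ be a parameter shift with limits $\lambda_\pm$, and let $X$ define a stable path with endpoints $X_\pm$. For $r>0$ let $\{x_n^r\}_{n\in\mathbb{Z}}$ be the unique solution of $x_{n+1}=f(x_n,\Lambda(rn))$ with $\lim_{n\to-\infty}x_n^r=X_-$. Let $Z_1=f(X_-,\Lambda(0))$ and $Z_2=f(Z_1,\lambda_+)$. If $Z_2\in\mathbb{B}(Y_+,\lambda_+)$ for some attracting fixed point $Y_+$ of $f(\cdot,\lambda_+)$, then there exists $r_1>0$ such that for all $r>r_1$, $x_n^r\to Y_+$ as $n\to\infty$.
   Context: A parameter shift is a $C^1$ function $\Lambda:\mathbb{R}\to\mathbb{R}^m$ with $\lim_{s\to\pm\infty}\Lambda(s)=\lambda_\pm$ and $\lim_{s\to\pm\infty}\Lambda'(s)=0$. A stable path is given by $X:\mathbb{R}\to\mathbb{R}^\ell$ such that: $X(s)$ is a fixed point of $f(\cdot,\Lambda(s))$ for every $s$; $\{(s,X(s))\}$ is a connected curve; the limits $X_\pm=\lim_{s\to\pm\infty}X(s)$ exist and are fixed points of $f(\cdot,\lambda_\pm)$; and the spectral radius of $D_xf(X(s),\Lambda(s))$ is $<1$ for all $s\in\mathbb{R}\cup\{\pm\infty\}$ (with $X(\pm\infty)=X_\pm$, $\Lambda(\pm\infty)=\lambda_\pm$). It is known that for each $r>0$ there is a unique solution with $x_n^r\to X_-$ as $n\to-\infty$. For a fixed point $p$ of $f(\cdot,\lambda)$,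 the basin of attraction $\mathbb{B}(p,\lambda)$ is the set of $x\in\mathbb{R}^\ell$ whose iterates under $f(\cdot,\lambda)$ converge to $p$. *)

(* Defs.v *)
From HB Require Import structures.
From mathcomp Require Import all_boot all_order all_algebra.
From mathcomp Require Import all_classical all_reals all_analysis.
From mathcomp Require Import complex.
Set Implicit Arguments. Unset Strict Implicit. Unset Printing Implicit Defensive.
Import Order.TTheory GRing.Theory Num.Theory.
Import numFieldNormedType.Exports.
Local Open Scope classical_set_scope.
Local Open Scope ring_scope.

Definition uncurry_f (R : realType) (l m : nat)
  (f : 'rV[R]_l -> 'rV[R]_m -> 'rV[R]_l) : 'rV[R]_(l + m) -> 'rV[R]_l :=
  fun z => f (lsubmx z) (rsubmx z).

Definition C1_map (R : realType) (l m : nat)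
  (f : 'rV[R]_l -> 'rV[R]_m -> 'rV[R]_l) : Prop :=
  (forall z, differentiable (uncurry_f f) z) /\
  continuous (fun z => jacobian (uncurry_f f) z).

Definition Dxf (R : realType) (l m : nat)
  (f : 'rV[R]_l -> 'rV[R]_m -> 'rV[R]_l) (x : 'rV[R]_l) (lam : 'rV[R]_m)
  : 'M[R]_l := jacobian (fun y => f y lam) x.

Definition eigenvalueC (R : realType) (n : nat) (A : 'M[R]_n) (z : complex R) : Prop :=
  root (map_poly (fun a : R => (a%:C)%C) (char_poly A)) z.

Definition spectral_radius_lt1 (R : realType) (n : nat) (A : 'M[R]_n) : Prop :=
  forall z : complex R, eigenvalueC A z -> `|z| < 1.

Definition parameter_shift (R : realType) (m : nat) (Lam : R -> 'rV[R]_m)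
  (lam_m lam_p : 'rV[R]_m) : Prop :=
  (forall s, derivable Lam s 1) /\ continuous (fun s => 'D_1 Lam s) /\
  (Lam s @[s --> -oo] --> lam_m) /\ (Lam s @[s --> +oo] --> lam_p) /\
  ('D_1 Lam s @[s --> -oo] --> (0 : 'rV[R]_m)) /\
  ('D_1 Lam s @[s --> +oo] --> (0 : 'rV[R]_m)).

Definition stable_path (R : realType) (l m : nat)
  (f : 'rV[R]_l -> 'rV[R]_m -> 'rV[R]_l) (Lam : R -> 'rV[R]_m)
  (lam_m lam_p : 'rV[R]_m) (X : R -> 'rV[R]_l) (X_m X_p : 'rV[R]_l) : Prop :=
  (forall s, f (X s) (Lam s) = X s) /\
  connected [set p : R * 'rV[R]_l | p.2 = X p.1] /\
  (X s @[s --> -oo] --> X_m) /\ (X s @[s --> +oo] --> X_p) /\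
  f X_m lam_m = X_m /\ f X_p lam_p = X_p /\
  (forall s, spectral_radius_lt1 (Dxf f (X s) (Lam s))) /\
  spectral_radius_lt1 (Dxf f X_m lam_m) /\
  spectral_radius_lt1 (Dxf f X_p lam_p).

Definition basin (R : realType) (l m : nat)
  (f : 'rV[R]_l -> 'rV[R]_m -> 'rV[R]_l) (p : 'rV[R]_l) (lam : 'rV[R]_m)
  : set 'rV[R]_l :=
  [set x | (fun k : nat => iter k (fun y => f y lam) x) @ \oo --> p].

Definition attracting_fixed_point (R : realType) (l m : nat)
  (f : 'rV[R]_l -> 'rV[R]_m -> 'rV[R]_l) (p : 'rV[R]_l) (lam : 'rV[R]_m) : Prop :=
  f p lam = p /\ spectral_radius_lt1 (Dxf f p lam).

Definition pullback_solution (R : realType) (l m : nat)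
  (f : 'rV[R]_l -> 'rV[R]_m -> 'rV[R]_l) (Lam : R -> 'rV[R]_m) (r : R)
  (X_m : 'rV[R]_l) (x : int -> 'rV[R]_l) : Prop :=
  (forall n : int, x (n + 1)%R = f (x n) (Lam (r * n%:~R))) /\
  ((fun k : nat => x (- (k%:Z))%R) @ \oo --> X_m).

(* Main.v *)
Require Import Defs.
From HB Require Import structures.
From mathcomp Require Import all_boot all_order all_algebra.
From mathcomp Require Import all_classical all_reals all_analysis.
From mathcomp Require Import complex.
From mathcomp Require Import ring lra.
Import Order.TTheory GRing.Theory Num.Theory.
Import numFieldNormedType.Exports.
Local Open Scope classical_set_scope.
Local Open Scope ring_scope.

Section S.
Variable R : realType.
Definition to0 (d : nat -> R) := forall e, 0 < e -> exists K, forall k, (K <= k)%N -> `|d k| <= e.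

Lemma cvg_to0 (d : nat -> R) : d @ \oo --> 0 -> to0 d.
Proof.
move=> /cvgr0Pnorm_le H e e0; have := H e e0.
move=> [N _ HN]; exists N => k Nk; exact: HN.
Qed.

Lemma scalar_rec (c : R) (d b : nat -> R) : 0 <= c -> c < 1 ->
  (forall k, `|d k.+1| <= c * `|d k| + `|b k|) -> to0 b -> to0 d.
Proof.
move=> c0 c1 Hd Hb e e0.
have e1 : 0 < e * (1 - c) / 2 by apply: divr_gt0 => //; apply: mulr_gt0; lra.
have [K HK] := Hb _ e1.
have claim : forall j, `|d (K + j)%N| <= c ^+ j * `|d K| + e / 2.
  elim=> [|j IH]; first by rewrite addn0 expr0 mul1r; lra.
  rewrite addnS; apply: le_trans (Hd _) _.
  have := HK (K + j)%N (leq_addr _ _).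
  have := ler_wpM2l c0 IH.
  rewrite exprS mulrDr mulrA; lra.
have cabs : `|c| < 1 by rewrite ger0_norm.
have := @cvg_to0 (fun n => c ^+ n) (cvg_expr cabs).

move=> /(_ (e / 2 / (`|d K| + 1))) [].
  by apply: divr_gt0; [lra|]; apply: ltr_pwDr.
move=> J HJ; exists (K + J)%N => k Kk.
have [j kj] : exists j, k = (K + j)%N.
  by exists (k - K)%N; rewrite subnKC //; apply: leq_trans Kk; apply: leq_addr.
rewrite kj; rewrite kj leq_add2l in Kk.
apply: le_trans (claim _) _.
have := HJ j Kk; rewrite ger0_norm ?exprn_ge0 // => H2.
have dk0 : 0 <= `|d K| by [].
have dk1 : 0 < `|d K| + 1 by lra.
have H3 : c ^+ j * `|d K| <= e / 2.
  apply: le_trans (ler_wpM2r dk0 H2) _.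
  have t0 : 0 <= e / 2 / (`|d K| + 1) by apply: ltW; apply: divr_gt0 => //; lra.
  have := ler_wpM2l t0 (_ : `|d K| <= `|d K| + 1); rewrite divfK; last by apply: lt0r_neq0.
  by move=> /(_ ltac:(lra)).
lra.
Qed.
Definition nc (z : R[i]) : R := Normc.normc z.
Lemma ncE z : `|z| = ((nc z)%:C)%C. Proof. by []. Qed.
Lemma nc_ge0 z : 0 <= nc z. Proof. by case: z => a b; rewrite /nc /=; apply: sqrtr_ge0. Qed.
Lemma ncD z w : nc (z + w) <= nc z + nc w.
Proof. by rewrite -lecR -!ncE rmorphD /= -!ncE; apply: ler_normD. Qed.
Lemma ncM z w : nc (z * w) = nc z * nc w.
Proof. exact: Normc.normcM. Qed.
Lemma nc0 : nc 0 = 0. Proof. exact: Normc.normc0. Qed.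
Lemma ncR (a : R) : nc ((a%:C)%C) = `|a|.
Proof. by rewrite /nc /= expr0n /= addr0 sqrtr_sqr. Qed.
Lemma nclt1 z : `|z| < 1 -> nc z < 1.
Proof. by rewrite ncE -ltcR. Qed.

Lemma LA2 (z : R[i]) (a b : nat -> R[i]) : nc z < 1 ->
  (forall k, a k.+1 = z * a k + b k) -> to0 (fun k => nc (b k)) -> to0 (fun k => nc (a k)).
Proof.
move=> z1 Ha Hb; apply: (@scalar_rec (nc z) _ (fun k => nc (b k))) => //.
  exact: nc_ge0.
move=> k; rewrite !ger0_norm ?nc_ge0 // Ha -ncM; exact: ncD.
Qed.

Lemma LA3 n (B : 'M[R[i]]_n.+1) (s : seq R[i]) : (forall z, z \in s -> nc z < 1) ->
  forall W : 'M[R[i]]_n.+1, horner_mx B (\prod_(z <- s) ('X - z%:P)) *m W = 0 ->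
  forall i j, to0 (fun k => nc ((B ^+ k *m W) i j)).
Proof.
elim: s => [|z s IH] Hs W HW i j.
  move: HW; rewrite big_nil rmorph1 mul1mx => ->.
  by move=> e e0; exists 0%N => k _; rewrite mulmx0 mxE nc0 normr0 ltW.
have Hs' : forall z, z \in s -> nc z < 1 by move=> w ws; apply: Hs; rewrite inE ws orbT.
pose W' := (B - z%:M) *m W.
have HW' : horner_mx B (\prod_(z <- s) ('X - z%:P)) *m W' = 0.
  have hz : horner_mx B ('X - z%:P) = B - z%:M by rewrite rmorphB /= horner_mx_X horner_mx_C.
  rewrite /W' mulmxA -hz.
  move: HW; rewrite big_cons rmorphM hz !mulmxE => HW.
  by rewrite -HW -(rmorphM (horner_mx B)) [('X - _) * _]mulrC rmorphM /= hz.
have := IH Hs' W' HW' i j.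
apply: (@LA2 z (fun k => (B ^+ k *m W) i j) _ (Hs z _)); first by rewrite inE eqxx.
move=> k; rewrite /W' mulmxA mulmxBr mulmxBl.
have e1 : B ^+ k *m B = B ^+ k.+1 by rewrite exprSr mulmxE.
by rewrite e1 mul_mx_scalar -scalemxAl !mxE [RHS]addrC subrK.
Qed.

Lemma map_mxX n (A : 'M[R]_n.+1) k :
  map_mx (real_complex R) (A ^+ k) = (map_mx (real_complex R) A) ^+ k.
Proof.
elim: k => [|k IH]; first by rewrite !expr0 map_mx1.
by rewrite !exprS -!mulmxE map_mxM IH.
Qed.

Lemma LA4 n (A : 'M[R]_n.+1) : spectral_radius_lt1 A ->
  forall i j, to0 (fun k => (A ^+ k) i j).
Proof.
move=> HA i j.
pose B := map_mx (real_complex R) A.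
have [rs Hrs] := closed_field_poly_normal (char_poly B).
have lc : lead_coef (char_poly B) = 1 by apply/monicP; apply: char_poly_monic.
have CH : horner_mx B (\prod_(z <- rs) ('X - z%:P)) = 0.
  by have := Cayley_Hamilton B; rewrite Hrs lc scale1r.
have Hs : forall z, z \in rs -> nc z < 1.
  move=> z zr; apply: nclt1; apply: HA; rewrite /eigenvalueC.
  have -> : map_poly (fun a : R => (a%:C)%C) (char_poly A) = char_poly B.
    exact: (map_char_poly (real_complex R) A).
  by rewrite Hrs lc scale1r root_prod_XsubC.
have := @LA3 n B rs Hs 1 _ i j.
rewrite mulmx1 => /(_ CH) H e e0; have [K HK] := H e e0.
exists K => k Kk; have := HK k Kk.
by rewrite /B -map_mxX mulmx1 mxE ncR normr_id.
Qed.
Lemma mx_entry_le p q (M : 'M[R]_(p, q)) i j : `|M i j| <= `|M|.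
Proof.
have -> : `|M| = mx_norm M by [].
rewrite mx_normrE.
by apply/bigmax_geP; right; exists (i, j).
Qed.

Lemma mx_norm_le p q (M : 'M[R]_(p, q)) e : 0 <= e -> (forall i j, `|M i j| <= e) -> `|M| <= e.
Proof.
move=> e0 H; have -> : `|M| = mx_norm M by [].
rewrite mx_normrE.
by apply/bigmax_leP; split => // -[i j] _; apply: H.
Qed.

Lemma vmx_norm p q (v : 'rV[R]_p) (M : 'M[R]_(p, q)) : `|v *m M| <= p%:R * `|v| * `|M|.
Proof.
apply: mx_norm_le; first by apply: mulr_ge0; [apply: mulr_ge0|].
move=> i j; rewrite mxE; apply: le_trans (ler_norm_sum _ _ _) _.
have -> : p%:R * `|v| * `|M| = \sum_(k < p) (`|v| * `|M|).
  by rewrite sumr_const card_ord -mulrA mulr_natl.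
apply: ler_sum => k _; rewrite normrM; apply: ler_pM => //; exact: mx_entry_le.
Qed.

Arguments vmx_norm {p q}.
Arguments mx_norm_le {p q}.
Lemma adapted n (A : 'M[R]_n.+1) : spectral_radius_lt1 A ->
  exists (Nm : 'rV[R]_n.+1 -> R) (C th : R), 0 < C /\ 0 <= th /\ th < 1 /\
    (forall v, `|v| <= Nm v) /\ (forall v, Nm v <= C * `|v|) /\
    (forall u v, Nm (u + v) <= Nm u + Nm v) /\ (forall v, Nm (v *m A) <= th * Nm v).
Proof.
move=> HA.
have e0 : 0 < (2 * n.+1%:R)^-1 :> R by rewrite invr_gt0 mulr_gt0 // ltr0n.
have H1 : forall ij : 'I_n.+1 * 'I_n.+1, \forall k \near \oo,
    `|(A ^+ k) ij.1 ij.2| <= (2 * n.+1%:R)^-1.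
  move=> [i j]; have [K HK] := @LA4 n A HA i j _ e0.
  by exists K => // k /= Kk; apply: HK.
have H3 : \forall k \near \oo, forall ij : 'I_n.+1 * 'I_n.+1,
    `|(A ^+ k) ij.1 ij.2| <= (2 * n.+1%:R)^-1 by apply: filter_forall.
have H2 : \forall k \near \oo, (1 <= k)%N by exists 1%N.
 have [N _ HN] := filterI H2 H3.
have [N1 HN1] := HN N (leqnn N).
have hAN : forall v : 'rV[R]_n.+1, `|v *m A ^+ N| <= `|v| / 2.
  move=> v; apply: le_trans (vmx_norm _ _) _.
  have : `|A ^+ N| <= (2 * n.+1%:R)^-1 by apply: mx_norm_le => [|i j]; [exact: ltW|exact: (HN1 (i, j))].
  move=> h; have := ler_wpM2l (_ : 0 <= n.+1%:R * `|v|) h.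
  move=> /(_ (mulr_ge0 (ler0n _ _) (normr_ge0 _))).
  have nz : n.+1%:R != 0 :> R by rewrite pnatr_eq0.
  have E : n.+1%:R * `|v| / (2 * n.+1%:R) = `|v| / 2 :> R.
    by field; apply: lt0r_neq0; have := ler0n R n; lra.
  by rewrite E.
pose Nm (v : 'rV[R]_n.+1) := \sum_(k < N) `|v *m A ^+ k|.
pose C := 1 + \sum_(k < N) n.+1%:R * `|A ^+ k|.
have C0 : 1 <= C by rewrite /C lerDl; apply: sumr_ge0 => k _; apply: mulr_ge0.
have Nge : forall v, `|v| <= Nm v.
  move=> v; rewrite /Nm (_ : N = N.-1.+1); last by rewrite prednK.
  rewrite big_ord_recl expr0 mulmx1 lerDl; exact: sumr_ge0.
exists Nm, C, (1 - (2 * C)^-1); split; first lra.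
have iC : 0 < (2 * C)^-1 /\ (2 * C)^-1 <= 1 / 2.
  split; first by rewrite invr_gt0; lra.
  rewrite invfM mul1r; rewrite -[X in _ <= X]mulr1.
  apply: ler_wpM2l; first by rewrite invr_ge0; lra.
  by rewrite invf_le1 //; lra.
split; first lra.
split; first lra.
split; first exact: Nge.
split.
  move=> v; rewrite /Nm /C mulrDl mul1r -[X in X <= _]add0r; apply: lerD => //.
  rewrite mulr_suml; apply: ler_sum => k _.
  apply: le_trans (vmx_norm _ _) _; lra.
split.
  move=> u v; rewrite /Nm -big_split /=; apply: ler_sum => k _.
  rewrite mulmxDl; exact: ler_normD.
move=> v.
have E : Nm (v *m A) + `|v| = Nm v + `|v *m A ^+ N|.
  have E1 : forall k, v *m A *m A ^+ k = v *m A ^+ k.+1.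
    by move=> k; rewrite -mulmxA mulmxE -exprS.
  rewrite /Nm; under eq_bigr do rewrite E1.
  transitivity (\sum_(k < N.+1) `|v *m A ^+ k|).
    by rewrite big_ord_recl expr0 mulmx1 addrC.
  by rewrite big_ord_recr.
have := hAN v; have := Nge v.
have : Nm v <= C * `|v|.
  rewrite /Nm /C mulrDl mul1r -[X in X <= _]add0r; apply: lerD => //.
  rewrite mulr_suml; apply: ler_sum => k _.
  apply: le_trans (vmx_norm _ _) _; lra.
move=> h1 h2 h3.
have h4 : (2 * C)^-1 * Nm v <= `|v| / 2.
  have := ler_wpM2l (ltW (proj1 iC)) h1.
  have CC : C != 0 by apply: lt0r_neq0; lra.
  have -> : (2 * C)^-1 * (C * `|v|) = `|v| / 2 by field.
  done.
rewrite mulrBl mul1r; lra.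
Qed.
End S.

Section S.
Variable R : realType.

Lemma lip_cont (V W : normedModType R) (g : V -> W) K : 0 <= K ->
  (forall u v, `|g u - g v| <= K * `|u - v|) -> continuous g.
Proof.
move=> K0 H y; apply/cvgrPdist_lt => e e0; apply/nbhs_normP.
have K1 : 0 < K + 1 by lra.
exists (e / (K + 1)); first by apply: divr_gt0.
move=> z /= hz; apply: le_lt_trans (H _ _) _.
apply: le_lt_trans (ler_wpM2l K0 (ltW hz)) _.
have -> : K * (e / (K + 1)) = e - e / (K + 1).
  by field; apply: lt0r_neq0.
have : 0 < e / (K + 1) by apply: divr_gt0.
lra.
Qed.

Lemma is_diff_mulmxr p q (P : 'M[R]_(p, q)) (y : 'rV[R]_p) :
  is_diff y (fun v : 'rV[R]_p => v *m P) (fun v => v *m P).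
Proof.
have cP : continuous (fun v : 'rV[R]_p => v *m P).
  apply: (@lip_cont _ _ _ (p%:R * `|P|)); first by apply: mulr_ge0.
  move=> u v /=; rewrite -mulmxBl.
  by apply: le_trans (@vmx_norm R _ _ (u - v) P) _; rewrite mulrAC.
pose L : {linear 'rV[R]_p -> 'rV[R]_q} := mulmxr P.
have cL : continuous L by [].
apply: DiffDef; first exact: (linear_differentiable _ cL).
exact: (diff_lin _ cL).
Qed.

Lemma rowmx_norm_le p q1 q2 (a : 'M[R]_(p, q1)) (b : 'M[R]_(p, q2)) e :
  `|a| <= e -> `|b| <= e -> `|row_mx a b| <= e.
Proof.
move=> ha hb; apply: mx_norm_le; first exact: le_trans (normr_ge0 _) ha.
move=> i j; rewrite mxE; case: splitP => k _.
  exact: le_trans (@mx_entry_le R _ _ _ _ _) ha.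
exact: le_trans (@mx_entry_le R _ _ _ _ _) hb.
Qed.

Lemma cont_ed (V W : normedModType R) (g : V -> W) z : {for z, continuous g} ->
  forall e, 0 < e -> exists2 d, 0 < d & forall y, `|z - y| < d -> `|g z - g y| < e.
Proof.
move=> /cvgrPdist_lt H e e0; have /nbhs_normP [d d0 Hd] := H e e0.
by exists d => // y hy; apply: (Hd y hy).
Qed.

Variables (l m : nat) (f : 'rV[R]_l -> 'rV[R]_m -> 'rV[R]_l).
Hypothesis Hd : forall z, differentiable (uncurry_f f) z.

Lemma unc_row x lam : uncurry_f f (row_mx x lam) = f x lam.
Proof. by rewrite /uncurry_f row_mxKl row_mxKr. Qed.

Lemma CA1 y lam (v : 'rV[R]_l) : v *m Dxf f y lam = row_mx v 0 *m jacobian (uncurry_f f) (row_mx y lam).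
Proof.
pose P : 'M[R]_(l, l + m) := row_mx 1%:M 0.
pose q : 'rV[R]_(l + m) := row_mx 0 lam.
have hP : forall v : 'rV[R]_l, v *m P = row_mx v 0.
  by move=> w; rewrite mul_mx_row mulmx1 mulmx0.
have hE : (fun y' => f y' lam) = uncurry_f f \o ((fun y' : 'rV[R]_l => y' *m P) + cst q).
  apply: funext => y' /=.
  have -> : ((fun y'' : 'rV[R]_l => y'' *m P) + cst q) y' = y' *m P + q by [].
  by rewrite hP /q add_row_mx addr0 add0r unc_row.
have dh : is_diff y ((fun y' : 'rV[R]_l => y' *m P) + cst q) (fun v => v *m P).
  have dh0 : is_diff y ((fun y' : 'rV[R]_l => y' *m P) + cst q) ((fun v => v *m P) + 0).
    apply: is_diffD; by [exact: is_diff_mulmxr | exact: is_diff_cst].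
  by apply: (is_diff_eq dh0); rewrite addr0.
have dF := differentiableP (Hd (((fun y' : 'rV[R]_l => y' *m P) + cst q) y)).
have dg := is_diff_comp dh dF.
rewrite /Dxf hE /jacobian mul_rV_lin1 diff_val /= mul_rV_lin1 hP /q.
have -> : ((fun y'' : 'rV[R]_l => y'' *m P) + cst q) y = y *m P + q by [].
by rewrite hP /q add_row_mx addr0 add0r.
Qed.

Hypothesis HJ : continuous (fun z => jacobian (uncurry_f f) z).

Lemma coord_diff (t : R) (G : R -> 'rV[R]_l) (i : 'I_l) (dG : R -> 'rV[R]_l) :
  is_diff t G dG -> is_diff t (fun s => G s 0 i) (fun h => dG h 0 i).
Proof.
move=> dg.
have @co : {linear 'rV[R]_l -> R}.
  by exists (fun N : 'rV[R]_l => N 0 i); do 2![eexists]; do ?[constructor];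
     rewrite ?mxE// => ? *; rewrite ?mxE//; move=> ?; rewrite !mxE.
have cco : continuous co by apply: coord_continuous.
have dco : forall M, is_diff M co co.
  move=> M; apply: DiffDef; first exact: linear_differentiable.
  exact: diff_lin.
have := is_diff_comp dg (dco (G t)).
by [].
Qed.

Lemma mxBE p q (A B : 'M[R]_(p, q)) i j : (A - B) i j = A i j - B i j.
Proof. by rewrite !mxE. Qed.

Lemma CAmain x0 lam0 eta : 0 < eta -> exists2 d, 0 < d & forall x lam,
  `|x - x0| <= d -> `|lam - lam0| <= d ->
  `|f x lam - f x0 lam - (x - x0) *m Dxf f x0 lam0| <= eta * `|x - x0|.
Proof.
move=> eta0.
pose J := fun z => jacobian (uncurry_f f) z.
pose z0 := row_mx x0 lam0.
pose K : R := (l + m)%:R.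
have K0 : 0 <= K by apply: ler0n.
have e1 : 0 < eta / (K + 1) by apply: divr_gt0 => //; lra.
have [d d0 Hdj] := @cont_ed _ _ _ z0 (HJ z0) _ e1.
exists (d / 2); first by apply: divr_gt0.
move=> x lam hx hlam.
pose w := x - x0.
pose c : 'rV[R]_(l + m) := row_mx w 0.
have key : forall i, `|(f x lam - f x0 lam - w *m Dxf f x0 lam0) 0 i| <= K * (eta / (K + 1)) * `|w|.
  move=> i.
  pose gam := fun t : R => t *: c + row_mx x0 lam.
  pose phi := fun t : R => (uncurry_f f (gam t)) 0 i.
  have gd : forall t, is_diff t gam (fun h => h *: c).
    move=> t; have g0 : is_diff t ((fun h : R => h *: c) + cst (row_mx x0 lam)) ((fun h : R => h *: c) + 0).
      apply: is_diffD; by [exact: is_diff_scalel | exact: is_diff_cst].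
    by apply: (is_diff_eq g0); rewrite addr0.
  have pd : forall t, is_diff t phi (fun h => ('d (uncurry_f f) (gam t) (h *: c)) 0 i).
    move=> t; apply: (@coord_diff t (uncurry_f f \o gam)).
    exact: (is_diff_comp (gd t) (differentiableP (Hd (gam t)))).
  have pder : forall t : R, is_derive t (1 : R) phi ((c *m J (gam t)) 0 i).
    move=> t; apply: DeriveDef; first by apply: diff_derivable; exact: ex_diff.
    by rewrite deriveE; [rewrite diff_val scale1r /J /jacobian mul_rV_lin1 | exact: ex_diff].
  have [xi xiin Exi] := @MVT R phi (fun t => (c *m J (gam t)) 0 i) 0 1 ltr01 (fun t _ => pder t)
    (derivable_within_continuous (fun t _ => @ex_derive _ _ _ _ _ _ _ (pder t))).
  have p1 : phi 1 = f x lam 0 i.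
    by rewrite /phi /gam scale1r /c add_row_mx add0r /w subrK unc_row.
  have p0 : phi 0 = f x0 lam 0 i.
    by rewrite /phi /gam scale0r add0r unc_row.
  move: Exi; rewrite p1 p0 subr0 mulr1 => Exi.
  have E : (f x lam - f x0 lam - w *m Dxf f x0 lam0) 0 i = (c *m (J (gam xi) - J z0)) 0 i.
    by rewrite !mxBE Exi CA1 -/z0 mulmxBr mxBE.
  rewrite E; apply: le_trans (@mx_entry_le R _ _ _ _ _) _.
  apply: le_trans (@vmx_norm R _ _ _ _) _.
  have h1 : `|c| <= `|w| by apply: rowmx_norm_le; rewrite ?normr0.
  move: xiin; rewrite in_itv /= => /andP [xi0 xi1].
  have gx : gam xi = row_mx (xi *: w + x0) lam.
    by rewrite /gam /c scale_row_mx scaler0 add_row_mx add0r.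
  have h2 : `|J (gam xi) - J z0| <= eta / (K + 1).
    rewrite distrC; apply: ltW; apply: Hdj.
    rewrite gx /z0 opp_row_mx add_row_mx.
    have -> : x0 - (xi *: w + x0) = - (xi *: w) by rewrite opprD addrCA subrr addr0.
    apply: (@le_lt_trans _ _ (d / 2)); last by lra.
    apply: rowmx_norm_le; last by rewrite distrC.
    rewrite normrN normrZ ger0_norm; last lra.
    apply: le_trans hx; rewrite -/w -[X in _ <= X]mul1r.
    by apply: ler_wpM2r => //; lra.
  rewrite -/K mulrAC; apply: ler_pM => //.
    by apply: mulr_ge0.
  exact: ler_wpM2l.
apply: le_trans (_ : K * (eta / (K + 1)) * `|w| <= _).
  apply: mx_norm_le; first by apply: mulr_ge0 => //; apply: mulr_ge0 => //; apply: ltW.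
  by move=> i0 j; rewrite (ord1 i0); apply: key.
apply: ler_wpM2r => //.
have -> : K * (eta / (K + 1)) = eta - eta / (K + 1) by field; apply: lt0r_neq0; lra.
lra.
Qed.
End S.

Section S.
Variable R : realType.
Variables (n m : nat) (f : 'rV[R]_n.+1 -> 'rV[R]_m -> 'rV[R]_n.+1).
Hypothesis Hd : forall z, differentiable (uncurry_f f) z.
Hypothesis HJ : continuous (fun z => jacobian (uncurry_f f) z).

Lemma CA0 x0 lam0 e : 0 < e -> exists2 d, 0 < d & forall x lam,
  `|x - x0| <= d -> `|lam - lam0| <= d -> `|f x lam - f x0 lam0| < e.
Proof.
move=> e0.
have cF : {for row_mx x0 lam0, continuous (uncurry_f f)}.
  exact: differentiable_continuous.
have [d d0 H] := @cont_ed R _ _ _ _ cF _ e0.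
exists (d / 2); first by apply: divr_gt0.
move=> x lam hx hl; have := H (row_mx x lam).
rewrite !unc_row [`|f x lam - _|]distrC; apply.
rewrite opp_row_mx add_row_mx; apply: (@le_lt_trans _ _ (d / 2)); last by lra.
by apply: rowmx_norm_le; rewrite distrC.
Qed.

Lemma ROB p lam0 : spectral_radius_lt1 (Dxf f p lam0) ->
  exists (Nm : 'rV[R]_n.+1 -> R) (C th dl : R), [/\ 0 < C, 0 <= th, th < 1, 0 < dl &
   [/\ (forall v, `|v| <= Nm v), (forall v, Nm v <= C * `|v|) &
     (forall x lam, Nm (x - p) <= dl -> `|lam - lam0| <= dl ->
        Nm (f x lam - p) <= th * Nm (x - p) + Nm (f p lam - p))]].
Proof.
move=> srA.
have [Nm [C [th0 [C0 [th00 [th01 [Nge [Nle [Nadd Ncon]]]]]]]]] := @adapted R _ _ srA.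
pose eta := (1 - th0) / (2 * C).
have eta0 : 0 < eta by apply: divr_gt0; lra.
have [d d0 Hd'] := @CAmain R _ _ f Hd HJ p lam0 _ eta0.
have Ceta : C * eta = (1 - th0) / 2 by rewrite /eta; field; apply: lt0r_neq0.
exists Nm, C, (th0 + C * eta), d; split => //; first 1 [lra] ; first by lra.
split => // x lam hN hl.
have hx : `|x - p| <= d := le_trans (Nge _) hN.
set A := Dxf f p lam0.
have E : f x lam - p = (x - p) *m A + (f x lam - f p lam - (x - p) *m A) + (f p lam - p).
  set u := (x - p) *m A; set a := f x lam; set b := f p lam.
  by rewrite [u + _]addrC subrK addrA subrK.
rewrite E; apply: le_trans (Nadd _ _) _.
have h0 := Nadd ((x - p) *m A) (f x lam - f p lam - (x - p) *m A).
have h1 := Ncon (x - p).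
have h2 : Nm (f x lam - f p lam - (x - p) *m A) <= C * eta * Nm (x - p).
  apply: le_trans (Nle _) _; rewrite -mulrA; apply: ler_wpM2l; first lra.
  apply: le_trans (Hd' x lam hx hl) _; apply: ler_wpM2l; [lra | exact: Nge].
rewrite mulrDl; lra.
Qed.


Lemma INV p lam0 (Nm : 'rV[R]_n.+1 -> R) C th dl : f p lam0 = p -> 0 < C -> 0 <= th -> th < 1 ->
  (forall v, Nm v <= C * `|v|) ->
  (forall x lam, Nm (x - p) <= dl -> `|lam - lam0| <= dl ->
        Nm (f x lam - p) <= th * Nm (x - p) + Nm (f p lam - p)) ->
  forall eps, 0 < eps -> eps <= dl -> exists2 g, 0 < g & forall x lam,
    Nm (x - p) <= eps -> `|lam - lam0| <= g -> Nm (f x lam - p) <= eps.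
Proof.
move=> fp C0 th0 th1 Nle Hm eps e0 edl.
have e1 : 0 < (1 - th) * eps / C by apply: divr_gt0 => //; apply: mulr_gt0; lra.
have [d d0 Hc] := CA0 p lam0 _ e1.
exists (Num.min d dl); first by rewrite lt_min d0 /=; lra.
move=> x lam hN; rewrite le_min => /andP [hd hdl].
apply: le_trans (Hm x lam (le_trans hN edl) hdl) _.
have h1 : Nm (f p lam - p) <= (1 - th) * eps.
  apply: le_trans (Nle _) _.
  have := Hc p lam; rewrite subrr normr0 => /(_ (ltW d0) hd); rewrite fp => h.
  have -> : (1 - th) * eps = C * ((1 - th) * eps / C) by field; apply: lt0r_neq0.
  by apply: ler_wpM2l; [lra | apply: ltW].
have h2 : th * Nm (x - p) <= th * eps by apply: ler_wpM2l.
lra.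
Qed.

Lemma CONV p lam0 (Nm : 'rV[R]_n.+1 -> R) C th dl g : f p lam0 = p -> 0 < C -> 0 <= th -> th < 1 ->
  (forall v, `|v| <= Nm v) -> (forall v, Nm v <= C * `|v|) ->
  (forall x lam, Nm (x - p) <= dl -> `|lam - lam0| <= dl ->
        Nm (f x lam - p) <= th * Nm (x - p) + Nm (f p lam - p)) ->
  g <= dl ->
  (forall x lam, Nm (x - p) <= dl -> `|lam - lam0| <= g -> Nm (f x lam - p) <= dl) ->
  forall (y : nat -> 'rV[R]_n.+1) (mu : nat -> 'rV[R]_m),
  Nm (y 0%N - p) <= dl -> (forall k, y k.+1 = f (y k) (mu k)) ->
  (forall k, `|mu k - lam0| <= g) ->
  (forall e, 0 < e -> exists K, forall k, (K <= k)%N -> `|mu k - lam0| <= e) ->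
  to0 R (fun k => `|y k - p|).
Proof.
move=> fp C0 th0 th1 Nge Nle Hm gdl Hinv y mu y0 Hy Hmu Hcv.
have inv : forall k, Nm (y k - p) <= dl.
  by elim=> [|k IH] //; rewrite Hy; apply: Hinv.
have Nge0 : forall v, 0 <= Nm v by move=> v; apply: le_trans (Nge v).
have Hb : to0 R (fun k => Nm (f p (mu k) - p)).
  move=> e e0.
  have e1 : 0 < e / C by apply: divr_gt0.
  have [d d0 Hc] := CA0 p lam0 _ e1.
  have [K HK] := Hcv d d0.
  exists K => k Kk; rewrite ger0_norm //; apply: le_trans (Nle _) _.
  have := Hc p (mu k); rewrite subrr normr0 fp => /(_ (ltW d0) (HK k Kk)) h.
  have -> : e = C * (e / C) by field; apply: lt0r_neq0.
  by apply: ler_wpM2l; [lra | apply: ltW].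
have rec : forall k, `|Nm (y k.+1 - p)| <= th * `|Nm (y k - p)| + `|Nm (f p (mu k) - p)|.
  move=> k; rewrite !ger0_norm // Hy; apply: Hm => //; apply: le_trans gdl; exact: Hmu.
have H := @scalar_rec R th (fun k => Nm (y k - p)) _ th0 th1 rec Hb.
move=> e e0; have [K HK] := H e e0; exists K => k Kk.
rewrite normr_id; apply: le_trans (Nge _) _.
by have := HK k Kk; rewrite ger0_norm.
Qed.

Fixpoint orbit_seq (y : 'rV[R]_n.+1) (mu : nat -> 'rV[R]_m) (k : nat) : 'rV[R]_n.+1 :=
  match k with 0%N => y | k'.+1 => f (orbit_seq y mu k') (mu k') end.

Lemma CHAIN (lp : 'rV[R]_m) (z : 'rV[R]_n.+1) j e : 0 < e -> exists2 eta, 0 < eta &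
  forall y mu, `|y - z| <= eta -> (forall i, (i < j)%N -> `|mu i - lp| <= eta) ->
    `|orbit_seq y mu j - iter j (fun u => f u lp) z| <= e.
Proof.
elim: j e => [|j IH] e e0.
  by exists e => // y mu hy _ /=.
have [d d0 Hc] := CA0 (iter j (fun u => f u lp) z) lp _ e0.
have [eta eta0 He] := IH d d0.
exists (Num.min eta d); first by rewrite lt_min eta0 d0.
move=> y mu hy hmu /=.
have hmu' : forall i, (i < j)%N -> `|mu i - lp| <= eta.
  move=> i ij; have := hmu i (ltnW ij); rewrite le_min => /andP [] //.
have hy' : `|y - z| <= eta by move: hy; rewrite le_min => /andP [].
apply: ltW; apply: Hc; first by apply: He.
by have := hmu j (ltnSn j); rewrite le_min => /andP [].
Qed.
End S.


Section H.
Variable R : realType.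
Lemma ninf_ed (V : normedModType R) (g : R -> V) a : g s @[s --> -oo] --> a ->
  forall e, 0 < e -> exists M, 0 < M /\ forall s, s <= - M -> `|g s - a| <= e.
Proof.
move=> /cvgrPdist_le H e e0; have [M [_ HM]] := H e e0.
exists (`|M| + 1); split; first by have := normr_ge0 M; lra.
move=> s hs; rewrite distrC; apply: HM.
have := ler_norm (- M); rewrite normrN; lra.
Qed.

Lemma pinf_ed (V : normedModType R) (g : R -> V) a : g s @[s --> +oo] --> a ->
  forall e, 0 < e -> exists M, 0 < M /\ forall s, M <= s -> `|g s - a| <= e.
Proof.
move=> /cvgrPdist_le H e e0; have [M [_ HM]] := H e e0.
exists (`|M| + 1); split; first by have := normr_ge0 M; lra.
move=> s hs; rewrite distrC; apply: HM.
have := ler_norm M; lra.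
Qed.

Lemma seq_ed (V : normedModType R) (u : nat -> V) a : u @ \oo --> a ->
  forall e, 0 < e -> exists K, forall k, (K <= k)%N -> `|u k - a| <= e.
Proof.
move=> /cvgrPdist_le H e e0; have [K _ HK] := H e e0.
by exists K => k Kk; rewrite distrC; apply: HK.
Qed.

Lemma ed_seq (V : normedModType R) (u : nat -> V) a :
  (forall e, 0 < e -> exists K, forall k, (K <= k)%N -> `|u k - a| <= e) -> u @ \oo --> a.
Proof.
move=> H; apply/cvgrPdist_le => e e0; have [K HK] := H e e0.
by exists K => // k Kk; rewrite distrC; apply: HK.
Qed.

Lemma intS (k : nat) : (k%:Z + 1)%R = k.+1%:Z.
Proof. by rewrite -addn1 PoszD. Qed.
Lemma intNS (k : nat) : (- (k.+1%:Z) + 1)%R = - (k%:Z).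
Proof. by rewrite -intS opprD addrNK. Qed.
Lemma intR (k : nat) : ((k%:Z)%:~R : R) = k%:R.
Proof. by []. Qed.
Lemma intNR (k : nat) : ((- (k%:Z))%:~R : R) = - k%:R.
Proof. by rewrite mulrNz. Qed.
Lemma rk (r : R) (k : nat) : 0 <= r -> (1 <= k)%N -> r <= r * k%:R.
Proof. by move=> r0 k1; apply: ler_peMr => //; rewrite ler1n. Qed.
End H.

Theorem mainTheorem5 (R : realType) (l m : nat)
  (f : 'rV[R]_l -> 'rV[R]_m -> 'rV[R]_l)
  (Lam : R -> 'rV[R]_m) (lam_m lam_p : 'rV[R]_m)
  (X : R -> 'rV[R]_l) (X_m X_p : 'rV[R]_l) (Y_p : 'rV[R]_l) :
  C1_map f ->
  parameter_shift Lam lam_m lam_p ->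
  stable_path f Lam lam_m lam_p X X_m X_p ->
  attracting_fixed_point f Y_p lam_p ->
  basin f Y_p lam_p (f (f X_m (Lam 0)) lam_p) ->
  exists r1 : R, 0 < r1 /\
    forall r : R, r1 < r ->
    forall x : int -> 'rV[R]_l, pullback_solution f Lam r X_m x ->
      (fun k : nat => x (k%:Z)) @ \oo --> Y_p.
Proof.
case: l f X X_m X_p Y_p => [|n] f X X_m X_p Y_p C1 PS SP AT BS.
  exists 1; split => // r _ x _.
  have -> : (fun k : nat => x k%:Z) = fun=> Y_p by apply: funext => k; apply/rowP => -[].
  exact: cvg_cst.
have [Hd HJ] := C1.
have [_ [_ [Lm [Lp _]]]] := PS.
have [_ [_ [_ [_ [fXm [_ [_ [srm _]]]]]]]] := SP.
have [fY srY] := AT.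
have [N1 [C1' [th1 [dl1 [C10 th10 th11 dl10 [Nge1 Nle1 Hm1]]]]]] := @ROB R n m f Hd HJ X_m lam_m srm.
have [N2 [C2 [th2 [dl2 [C20 th20 th21 dl20 [Nge2 Nle2 Hm2]]]]]] := @ROB R n m f Hd HJ Y_p lam_p srY.
pose F := fun y => f y lam_p.
pose Z1 := f X_m (Lam 0).
have e2 : 0 < dl2 / (2 * C2) by apply: divr_gt0 => //; lra.
have BS' : (fun k : nat => iter k F (F Z1)) @ \oo --> Y_p := BS.
have [J HJb] := @seq_ed R _ _ _ BS' _ e2.
have HJ1 := HJb J (leqnn J).
have [eta eta0 Hch] := @CHAIN R n m f Hd lam_p Z1 J.+1 _ e2.
have [d1 d10 Hc1] := @CA0 R n m f Hd X_m (Lam 0) _ eta0.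
pose eps1 := Num.min dl1 d1.
have eps10 : 0 < eps1 by rewrite lt_min dl10 d10.
have eps1dl : eps1 <= dl1 by rewrite ge_min lexx.
have eps1d : eps1 <= d1 by rewrite ge_min lexx orbT.
have [g1 g10 Hinv1] := @INV R n m f Hd X_m lam_m N1 C1' th1 dl1 fXm C10 th10 th11 Nle1 Hm1 eps1 eps10 eps1dl.
have [M1 [M10 HM1]] := @ninf_ed R _ _ _ Lm _ g10.
have [M2 [M20 HM2]] := @pinf_ed R _ _ _ Lp _ eta0.
have [g2 g20 Hinv2] := @INV R n m f Hd Y_p lam_p N2 C2 th2 dl2 fY C20 th20 th21 Nle2 Hm2 dl2 dl20 (lexx _).
pose g2' := Num.min g2 dl2.
have g2'0 : 0 < g2' by rewrite lt_min g20 dl20.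
have g2'dl : g2' <= dl2 by rewrite ge_min lexx orbT.
have g2'g : g2' <= g2 by rewrite ge_min lexx.
have [M3 [M30 HM3]] := @pinf_ed R _ _ _ Lp _ g2'0.
exists (M1 + M2 + M3 + 1); split; first lra.
move=> r hr x [Hx Hxm].
have r0 : 0 <= r by lra.
have e3 : 0 < eps1 / C1' by apply: divr_gt0.
have [K HK] := @seq_ed R _ _ _ Hxm _ e3.
have HK1 : N1 (x (- (K%:Z))%R - X_m) <= eps1.
  apply: le_trans (Nle1 _) _.
  have -> : eps1 = C1' * (eps1 / C1') by field; apply: lt0r_neq0.
  by apply: ler_wpM2l; [lra | apply: HK].
have rk' : forall k, (1 <= k)%N -> r <= r * k%:R := fun k hk => @rk R r k r0 hk.
have step : forall k, N1 (x (- (k.+1%:Z))%R - X_m) <= eps1 -> N1 (x (- (k%:Z))%R - X_m) <= eps1.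
  move=> k hk; rewrite -intNS Hx; apply: Hinv1 => //.
  apply: HM1; rewrite intNR mulrN lerN2.
  apply: le_trans (rk' _ (ltn0Sn k)); lra.
have claim : forall j, (j <= K)%N -> N1 (x (- ((K - j)%N%:Z))%R - X_m) <= eps1.
  elim=> [|j IH] hj; first by rewrite subn0; exact: HK1.
  by apply: step; rewrite subnSK //; apply: IH; exact: ltnW.
have x0b : `|x 0 - X_m| <= d1.
  have := claim K (leqnn K); rewrite subnn oppr0 => h.
  by apply: le_trans (Nge1 _) _; apply: le_trans h _.
pose xp := fun k : nat => x (k%:Z).
have Hxp : forall k, xp k.+1 = f (xp k) (Lam (r * k%:R)).
  by move=> k; rewrite /xp -intS Hx.
have x1b : `|xp 1%N - Z1| <= eta.
  rewrite (Hxp 0%N) mulr0; apply: ltW; apply: Hc1 => //.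
  by rewrite subrr normr0; apply: ltW.
pose mu := fun i : nat => Lam (r * i.+1%:R).
have orbE : forall j, @orbit_seq R n m f (xp 1%N) mu j = xp j.+1.
  have orbS : forall y nu j, @orbit_seq R n m f y nu j.+1 = f (@orbit_seq R n m f y nu j) (nu j) by [].
  elim=> [|j IH]; first by simpl.
  by rewrite orbS IH [RHS]Hxp.
have hch := Hch (xp 1%N) mu x1b.
have hmu : forall i, (i < J.+1)%N -> `|mu i - lam_p| <= eta.
  by move=> i _; apply: HM2; apply: le_trans (rk' _ (ltn0Sn i)); lra.
have xJ : N2 (xp J.+2 - Y_p) <= dl2.
  have h := hch hmu; rewrite orbE iterSr in h.
  have h2 : `|xp J.+2 - Y_p| <= dl2 / C2.
    apply: le_trans (ler_distD (iter J F (F Z1)) _ _) _.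
    have -> : dl2 / C2 = dl2 / (2 * C2) + dl2 / (2 * C2) by field; apply: lt0r_neq0.
    by apply: lerD.
  apply: le_trans (Nle2 _) _.
  have -> : dl2 = C2 * (dl2 / C2) by field; apply: lt0r_neq0.
  by apply: ler_wpM2l => //; lra.
pose y := fun k : nat => xp (k + J.+2)%N.
pose mu' := fun k : nat => Lam (r * (k + J.+2)%N%:R).
have Hinv2' : forall x lam, N2 (x - Y_p) <= dl2 -> `|lam - lam_p| <= g2' -> N2 (f x lam - Y_p) <= dl2.
  by move=> x' lam h1 h2; apply: Hinv2 => //; apply: le_trans g2'g.
have y0 : N2 (y 0%N - Y_p) <= dl2 by rewrite /y add0n.
have Hy : forall k, y k.+1 = f (y k) (mu' k) by move=> k; rewrite /y addSn Hxp.
have Hmu' : forall k, `|mu' k - lam_p| <= g2'.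
  move=> k; apply: HM3; apply: le_trans (rk' _ _); first lra.
  by rewrite addnS.
have rpos : 0 < r by lra.
have Hcv' : forall e, 0 < e -> exists K, forall k, (K <= k)%N -> `|mu' k - lam_p| <= e.
  move=> e e0; have [M [M0 HM]] := @pinf_ed R _ _ _ Lp _ e0.
  exists (Num.truncn (M / r)).+1 => k Kk; apply: HM.
  have h1 := truncnS_gt (M / r).
  have h2 : ((Num.truncn (M / r)).+1%:R : R) <= (k + J.+2)%N%:R.
    by rewrite ler_nat; apply: leq_trans Kk _; apply: leq_addr.
  have -> : M = r * (M / r) by field; apply: lt0r_neq0.
  by apply: ler_wpM2l => //; lra.
have := @CONV R n m f Hd Y_p lam_p N2 C2 th2 dl2 g2' fY C20 th20 th21 Nge2 Nle2 Hm2 g2'dl Hinv2' y mu' y0 Hy Hmu' Hcv'.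
move=> H; rewrite -(cvg_shiftn J.+2); apply: ed_seq => e e0.
have [K2 HK2] := H e e0; exists K2 => k Kk.
by have := HK2 k Kk; rewrite normr_id.
Qed.
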